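(* Let $\phi=(1+\sqrt5)/2$, $R_0=(18-\sqrt5)/11$, $\alpha=R_0-1=2/(\phi+3)$, $\beta=\alpha/2=1/(\phi+3)$ and $\rho=\beta/\phi=(\phi-1)/(\phi+3)$. Let $P^A,P^B,S^A,S^B,Q$ be pairwise disjoint infinite sets of positive integers, each with a fixed enumeration, and for real $x\ge 0$ let $P^c_x$, $S^c_x$, $Q_x$ denote the first $\lfloor x\rfloor$ elements of $P^c$, $S^c$, $Q$ respectively. For $c\in\{A,B\}$, with $c'$ the other element of $\{A,B\}$, and integers $0<k\le t$, define $$F^c_{t,k}=P^c_{\alpha t+4}\cup\big(S^c_{\beta\min(t,\phi k)}\setminus S^c_{\beta(t-k)}\big)\cup\big(S^{c'}_{\beta k}\setminus S^{c'}_{\phi\beta(t-k)}\big)\cup\big(Q_{\rho\min(t,\phi k)}\setminus Q_{\phi\rho(t-k)}\big).$$ Then $\{F^c_{t,k}\}$ is an F-system, and for every positive integer $t$, $\left|\bigcup_{c\in\{A,B\}}\bigcup_{0<\kappa\le\tau\le t}F^c_{\tau,\kappa}\right|\le R_0 t+8$; in particular it is an $R_0$-competitive F-system.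
   Context: F-system: a family $\mathcal F=\{F^c_{t,k}\}$ of sets of positive integers, indexed by $c\in\{A,B\}$ and integers $0<k\le t$, such that (F1) $|F^c_{t,k}|\ge k$ for all $c,t,k$; and (F2) $F^A_{t,k}\cap F^B_{t',k'}=\emptyset$ for all $k\le t$, $k'\le t'$ with $k+k'\le\max(t,t')$. An F-system is $R$-competitive if there is a constant $\lambda$ (independent of $t$) such that for every positive integer $t$, $\left|\bigcup_{c\in\{A,B\}}\bigcup_{0<\kappa\le\tau\le t}F^c_{\tau,\kappa}\right|\le Rt+\lambda$. *)

(* Defs.v *)
From Stdlib Require Import Reals.
From mathcomp Require Import all_boot.

Local Open Scope R_scope.
Set Implicit Arguments. Unset Strict Implicit. Unset Printing Implicit Defensive.

Inductive col := CA | CB.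
Definition other (c : col) : col := match c with CA => CB | CB => CA end.

(* floor of a real, as a nat (arguments used are >= 0). Int_part is the floor. *)
Definition flr (x : R) : nat := Z.to_nat (Int_part x).

Definition pref (e : nat -> nat) (x : R) : seq nat := [seq e i | i <- iota 0 (flr x)].

Definition sdiff (s1 s2 : seq nat) : seq nat := [seq x <- s1 | x \notin s2].

Definition scard (s : seq nat) : nat := size (undup s).

Definition disj (s1 s2 : seq nat) : Prop := forall x, x \in s1 -> x \notin s2.

Definition F_system (F : col -> nat -> nat -> seq nat) : Prop :=
  (forall c t k, (0 < k <= t)%N -> all (fun x => 0 < x)%N (F c t k)) /\
  (forall c t k, (0 < k <= t)%N -> (k <= scard (F c t k))%N) /\
  (forall t k t' k', (0 < k <= t)%N -> (0 < k' <= t')%N ->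
       (k + k' <= maxn t t')%N -> disj (F CA t k) (F CB t' k')).

Definition Funion (F : col -> nat -> nat -> seq nat) (t : nat) : seq nat :=
  flatten [seq F c tk.1 tk.2
           | c <- [:: CA; CB],
             tk <- flatten [seq [seq (tau, kap) | kap <- iota 1 tau] | tau <- iota 1 t]].

Definition competitive (Rc : R) (F : col -> nat -> nat -> seq nat) : Prop :=
  exists lambda : R, forall t : nat, (0 < t)%N ->
    INR (scard (Funion F t)) <= Rc * INR t + lambda.

Definition phi_g : R := (1 + sqrt 5) / 2.
Definition R_0 : R := (18 - sqrt 5) / 11.
Definition alpha : R := R_0 - 1.
Definition beta : R := alpha / 2.
Definition rho : R := beta / phi_g.

Definition Fsys (P S : col -> nat -> nat) (Q : nat -> nat) (c : col) (t k : nat)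
  : seq nat :=
  let tR := INR t in let kR := INR k in
  pref (P c) (alpha * tR + 4)
  ++ sdiff (pref (S c) (beta * Rmin tR (phi_g * kR))) (pref (S c) (beta * (tR - kR)))
  ++ sdiff (pref (S (other c)) (beta * kR)) (pref (S (other c)) (phi_g * beta * (tR - kR)))
  ++ sdiff (pref Q (rho * Rmin tR (phi_g * kR))) (pref Q (phi_g * rho * (tR - kR))).

(* Main.v *)
Require Import Defs.
From Stdlib Require Import Reals ZArith Lra Lia Psatz.
From mathcomp Require Import all_boot zify.
Local Open Scope R_scope.

Lemma flr_gt x : x - 1 < INR (flr x).
Proof.
rewrite /flr. destruct (base_Int_part x) as [H1 H2].
destruct (Z_le_gt_dec 0 (Int_part x)) as [Hz|Hz].
- rewrite INR_IZR_INZ Z2Nat.id //. lra.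
- rewrite (_ : Z.to_nat _ = 0%nat); [|lia].
  have : (Int_part x <= -1)%Z by lia.
  move/IZR_le => h. simpl. lra.
Qed.

Lemma flr_le x : 0 <= x -> INR (flr x) <= x.
Proof.
move=> hx. rewrite /flr. destruct (base_Int_part x) as [H1 H2].
destruct (Z_le_gt_dec 0 (Int_part x)) as [Hz|Hz].
- rewrite INR_IZR_INZ Z2Nat.id //.
- rewrite (_ : Z.to_nat _ = 0%nat); [|lia]. simpl. lra.
Qed.

Lemma flr_mono x y : x <= y -> (flr x <= flr y)%N.
Proof.
move=> hxy. rewrite /flr. destruct (base_Int_part x) as [H1 H2].
destruct (base_Int_part y) as [H3 H4].
have : (Int_part x < Int_part y + 1)%Z.
  apply: lt_IZR. rewrite plus_IZR. lra.
move=> h. apply/leP. lia.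
Qed.

Lemma INR_addn a b : INR (a + b)%N = INR a + INR b.
Proof. exact: plus_INR. Qed.

Lemma INR_subn a b : INR a - INR b <= INR (a - b)%N.
Proof.
case: (leqP b a) => h.
- have e : (a - b + b)%N = a by rewrite subnK.
  rewrite -{1}e INR_addn. lra.
- have -> : (a - b)%N = 0%N by apply/eqP; rewrite subn_eq0; apply: ltnW.
  have : (a <= b)%coq_nat by lia.
  move=> hab; have := le_INR _ _ hab; simpl; lra.
Qed.

Lemma sdiff_pref e (inj : injective e) A B :
  sdiff (pref e A) (pref e B) = map e (iota (flr B) (flr A - flr B)).
Proof.
rewrite /sdiff /pref filter_map. congr map.
set a := flr A; set b := flr B.
rewrite (@eq_filter _ _ (fun i => b <= i)%N); last first.
  by move=> i /=; rewrite mem_map // mem_iota leq0n add0n /= -leqNgt.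
case: (leqP a b) => h.
- have -> : (a - b)%N = 0%N by apply/eqP; rewrite subn_eq0.
  rewrite (@eq_in_filter _ _ pred0); first by rewrite filter_pred0.
  move=> i; rewrite mem_iota /= => hi. apply/negbTE. rewrite -ltnNge. lia.
- rewrite -{1}(subnKC (ltnW h)) iotaD filter_cat add0n.
  rewrite (@eq_in_filter _ _ pred0 (iota 0 b)); last first.
    move=> i; rewrite mem_iota /= => hi. apply/negbTE. rewrite -ltnNge. lia.
  rewrite filter_pred0 /=.
  rewrite (@eq_in_filter _ _ predT); first by rewrite filter_predT.
  move=> i; rewrite mem_iota /= => hi. lia.
Qed.

Lemma s5sq : sqrt 5 * sqrt 5 = 5.
Proof. apply: sqrt_sqrt; lra. Qed.
Lemma s5pos : 0 <= sqrt 5.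
Proof. apply: sqrt_pos. Qed.
Lemma s5lt3 : sqrt 5 < 3.
Proof. have := s5sq; have := s5pos; nra. Qed.
Lemma s5gt2 : 2 < sqrt 5.
Proof. have := s5sq; have := s5pos; nra. Qed.

Lemma alpha_eq : alpha = (7 - sqrt 5) / 11.
Proof. rewrite /alpha /R_0; lra. Qed.
Lemma beta_eq : beta = (7 - sqrt 5) / 22.
Proof. rewrite /beta alpha_eq; lra. Qed.
Lemma phib_eq : phi_g * beta = (1 + 3 * sqrt 5) / 22.
Proof. rewrite beta_eq /phi_g. have := s5sq; nra. Qed.
Lemma phi_pos : 0 < phi_g.
Proof. rewrite /phi_g; have := s5pos; lra. Qed.
Lemma rho_eq : rho = (2 * sqrt 5 - 3) / 11.
Proof.
rewrite /rho beta_eq. have := phi_pos => hp.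
apply: (Rmult_eq_reg_r phi_g); last lra.
field_simplify; last lra. rewrite /phi_g. have := s5sq; nra.
Qed.
Lemma phir_eq : phi_g * rho = beta.
Proof. rewrite /rho. have := phi_pos => hp. field. lra. Qed.
Lemma alpha_pos : 0 < alpha.
Proof. rewrite alpha_eq; have := s5lt3; lra. Qed.
Lemma beta_pos : 0 < beta.
Proof. rewrite beta_eq; have := s5lt3; lra. Qed.
Lemma rho_pos : 0 < rho.
Proof. rewrite rho_eq; have := s5gt2; lra. Qed.
Lemma R0_eq : R_0 = 2 * alpha + 2 * beta + rho.
Proof. rewrite rho_eq beta_eq alpha_eq /R_0; lra. Qed.

Lemma F1_real (t k n0 n1 n2 n3 : R) : 0 < k <= t ->
  n0 > alpha * t + 3 -> 0 <= n1 -> 0 <= n2 -> 0 <= n3 ->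
  n1 > beta * Rmin t (phi_g * k) - 1 - beta * (t - k) ->
  n2 > beta * k - 1 - phi_g * beta * (t - k) ->
  n3 > rho * Rmin t (phi_g * k) - 1 - phi_g * rho * (t - k) ->
  n0 + n1 + n2 + n3 > k - 1.
Proof.
move=> hk h0 p1 p2 p3 h1 h2 h3.
rewrite phir_eq in h3. rewrite phib_eq in h2.
rewrite /Rmin in h1 h3; destruct (Rle_dec t (phi_g * k)).
- rewrite alpha_eq beta_eq rho_eq in h0 h1 h2 h3. lra.
- have e1 : beta * (phi_g * k) = (phi_g * beta) * k by ring.
  have e2 : rho * (phi_g * k) = (phi_g * rho) * k by ring.
  rewrite e1 phib_eq in h1. rewrite e2 phir_eq in h3.
  rewrite alpha_eq beta_eq in h0 h1 h2 h3. lra.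
Qed.

Lemma Funion_sub (F : col -> nat -> nat -> seq nat) t (U : seq nat) :
  (forall c tau kap, (0 < kap <= tau)%N -> (tau <= t)%N -> {subset F c tau kap <= U}) ->
  {subset Funion F t <= U}.
Proof.
move=> H x. rewrite /Funion /= cats0 flatten_cat mem_cat => /orP [] /flattenP [s /mapP [p hp ->]] hx;
  move: hp hx => /allpairsPdep [tau [kap [ht hk ->]]] hx; rewrite mem_iota in ht; rewrite mem_iota in hk;
  apply: (H _ tau kap); try lia; exact hx.
Qed.

Lemma nohas (f g : nat -> nat) (I J : seq nat) :
  (forall i j, f i <> g j) -> ~~ has (mem (map f I)) (map g J).
Proof.
move=> h. rewrite has_map. apply/hasPn => j _ /=. apply/mapP => -[i _ e].
exact: (h i j (esym e)).
Qed.

Lemma disj_cat_l a b s : disj a s -> disj b s -> disj (a ++ b) s.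
Proof. move=> h1 h2 x; rewrite mem_cat => /orP []; [exact: h1 | exact: h2]. Qed.
Lemma disj_cat_r s a b : disj s a -> disj s b -> disj s (a ++ b).
Proof. move=> h1 h2 x hx; rewrite mem_cat negb_or (h1 x hx) (h2 x hx). done. Qed.
Lemma disj_maps (f g : nat -> nat) I J :
  (forall i j, i \in I -> j \in J -> f i = g j -> False) -> disj (map f I) (map g J).
Proof.
move=> h x /mapP [i hi ->]. apply/mapP => -[j hj e]. exact: (h i j hi hj e).
Qed.

Lemma uniq4 (f1 f2 f3 f4 : nat -> nat) l1 n1 l2 n2 l3 n3 l4 n4 :
  injective f1 -> injective f2 -> injective f3 -> injective f4 ->
  (forall i j, f1 i <> f2 j) -> (forall i j, f1 i <> f3 j) -> (forall i j, f1 i <> f4 j) ->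
  (forall i j, f2 i <> f3 j) -> (forall i j, f2 i <> f4 j) -> (forall i j, f3 i <> f4 j) ->
  uniq (map f1 (iota l1 n1) ++ map f2 (iota l2 n2) ++ map f3 (iota l3 n3) ++ map f4 (iota l4 n4)).
Proof.
move=> i1 i2 i3 i4 h12 h13 h14 h23 h24 h34.
rewrite !cat_uniq !has_cat !map_inj_uniq // !iota_uniq /=.
rewrite (negbTE (nohas _ _ _ _ h12)) (negbTE (nohas _ _ _ _ h13)) (negbTE (nohas _ _ _ _ h14)).
by rewrite (negbTE (nohas _ _ _ _ h23)) (negbTE (nohas _ _ _ _ h24)) (negbTE (nohas _ _ _ _ h34)).
Qed.

Lemma bnd_min (c x y d : R) : 0 <= c -> y <= d -> c * Rmin x (phi_g * y) <= phi_g * c * d.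
Proof.
move=> hc hy. have h1 := Rmin_r x (phi_g * y). have h2 := phi_pos.
have h3 := Rmult_le_compat_l c _ _ hc h1.
have h4 : 0 <= c * phi_g * (d - y) by apply: Rmult_le_pos; [apply: Rmult_le_pos|]; lra.
lra.
Qed.

Theorem mainTheorem4 (P S : col -> nat -> nat) (Q : nat -> nat)
  (injP : forall c, injective (P c)) (injS : forall c, injective (S c))
  (injQ : injective Q)
  (posP : forall c i, (0 < P c i)%N) (posS : forall c i, (0 < S c i)%N)
  (posQ : forall i, (0 < Q i)%N)
  (dPP : forall i j, P CA i <> P CB j) (dSS : forall i j, S CA i <> S CB j)
  (dPS : forall c c' i j, P c i <> S c' j)
  (dPQ : forall c i j, P c i <> Q j) (dSQ : forall c i j, S c i <> Q j) :
  F_system (Fsys P S Q) /\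
  (forall t : nat, (0 < t)%N ->
     INR (scard (Funion (Fsys P S Q) t)) <= R_0 * INR t + 8) /\
  competitive R_0 (Fsys P S Q).
Proof.
have dSo : forall c i j, S c i <> S (other c) j.
  case=> i j /=; [exact: dSS | move=> e; exact: (dSS j i (esym e))].
have nf : forall c t k, Fsys P S Q c t k =
  map (P c) (iota 0 (flr (alpha * INR t + 4))) ++
  map (S c) (iota (flr (beta * (INR t - INR k))) (flr (beta * Rmin (INR t) (phi_g * INR k)) - flr (beta * (INR t - INR k)))) ++
  map (S (other c)) (iota (flr (phi_g * beta * (INR t - INR k))) (flr (beta * INR k) - flr (phi_g * beta * (INR t - INR k)))) ++
  map Q (iota (flr (phi_g * rho * (INR t - INR k))) (flr (rho * Rmin (INR t) (phi_g * INR k)) - flr (phi_g * rho * (INR t - INR k)))).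
  move=> c t k; rewrite /Fsys.
  by rewrite (sdiff_pref _ (injS c)) (sdiff_pref _ (injS (other c))) (sdiff_pref _ injQ).
have hapos := alpha_pos; have hbpos := beta_pos; have hrpos := rho_pos; have hphi := phi_pos.
have hunion : forall t, (0 < t)%N -> INR (scard (Funion (Fsys P S Q) t)) <= R_0 * INR t + 8.
  move=> t ht.
  set N := flr (alpha * INR t + 4). set M := flr (beta * INR t). set L := flr (rho * INR t).
  set U := map (P CA) (iota 0 N) ++ map (P CB) (iota 0 N) ++ map (S CA) (iota 0 M) ++
           map (S CB) (iota 0 M) ++ map Q (iota 0 L).
  have UP : forall c i, (i < N)%N -> P c i \in U.
    case=> i hi; rewrite /U !mem_cat; apply/orP; [left | right; apply/orP; left];
      apply: map_f; rewrite mem_iota; lia.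
  have US : forall c i, (i < M)%N -> S c i \in U.
    case=> i hi; rewrite /U !mem_cat; apply/orP; right; apply/orP; right; apply/orP;
      [left | right; apply/orP; left]; apply: map_f; rewrite mem_iota; lia.
  have UQ : forall i, (i < L)%N -> Q i \in U.
    move=> i hi; rewrite /U !mem_cat; apply/orP; right; apply/orP; right; apply/orP;
      right; apply/orP; right; apply: map_f; rewrite mem_iota; lia.
  have sub : {subset Funion (Fsys P S Q) t <= U}.
    apply: Funion_sub => c tau kap hk ht' x.
    have htau : INR tau <= INR t by apply: le_INR; lia.
    have hkap : INR kap <= INR tau by apply: le_INR; lia.
    have hm : Rmin (INR tau) (phi_g * INR kap) <= INR t by have := Rmin_l (INR tau) (phi_g * INR kap); lra.
    have f0 : (flr (alpha * INR tau + 4) <= N)%N by apply: flr_mono; nra.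
    have f1 : (flr (beta * Rmin (INR tau) (phi_g * INR kap)) <= M)%N by apply: flr_mono; nra.
    have f2 : (flr (beta * INR kap) <= M)%N by apply: flr_mono; nra.
    have f3 : (flr (rho * Rmin (INR tau) (phi_g * INR kap)) <= L)%N by apply: flr_mono; nra.
    move=> hx; rewrite nf !mem_cat in hx.
    case/or4P: hx => /mapP [i Hi ->]; rewrite mem_iota in Hi.
    - apply: UP; lia.
    - apply: US; lia.
    - apply: US; lia.
    - apply: UQ; lia.
  have hs : (scard (Funion (Fsys P S Q) t) <= size U)%N.
    rewrite /scard; apply: uniq_leq_size; first exact: undup_uniq.
    by move=> x; rewrite mem_undup; apply: sub.
  have hsz : size U = (N + N + M + M + L)%N.
    rewrite /U !size_cat !size_map !size_iota; lia.
  have tpos : 0 <= INR t by apply: pos_INR.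
  have hN : INR N <= alpha * INR t + 4 by apply: flr_le; nra.
  have hM : INR M <= beta * INR t by apply: flr_le; nra.
  have hL : INR L <= rho * INR t by apply: flr_le; nra.
  have : INR (scard (Funion (Fsys P S Q) t)) <= INR (size U) by apply: le_INR; lia.
  rewrite hsz !INR_addn R0_eq. lra.
split; last split => //; last by exists 8.
split; [|split].
- move=> c t k hk. rewrite nf !all_cat; apply/and4P; split; apply/allP => x /mapP [i _ ->] //.
- move=> c t k hk. rewrite /scard nf undup_id; last first.
    apply: uniq4; [exact: injP|exact: injS|exact: injS|exact: injQ|move=> i j; exact: dPS
      |move=> i j; exact: dPS|move=> i j; exact: dPQ|move=> i j; exact: dSo|move=> i j; exact: dSQ
      |move=> i j; exact: dSQ].
  rewrite !size_cat !size_map !size_iota.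
  have tk : INR k <= INR t by apply: le_INR; lia.
  have kp : 0 < INR k by apply: lt_0_INR; lia.
  have tk0 : 0 <= INR t - INR k by lra.
  have : INR k - 1 < INR (flr (alpha * INR t + 4) +
     (flr (beta * Rmin (INR t) (phi_g * INR k)) - flr (beta * (INR t - INR k)) +
     (flr (beta * INR k) - flr (phi_g * beta * (INR t - INR k)) +
      (flr (rho * Rmin (INR t) (phi_g * INR k)) - flr (phi_g * rho * (INR t - INR k)))))).
    rewrite !INR_addn -!Rplus_assoc.
    apply: (F1_real (INR t) (INR k)); first lra.
    + have := flr_gt (alpha * INR t + 4); lra.
    + exact: pos_INR.
    + exact: pos_INR.
    + exact: pos_INR.
    + have := INR_subn (flr (beta * Rmin (INR t) (phi_g * INR k))) (flr (beta * (INR t - INR k))).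
      have := flr_gt (beta * Rmin (INR t) (phi_g * INR k)).
      have := flr_le (beta * (INR t - INR k)) (Rmult_le_pos _ _ (Rlt_le _ _ hbpos) tk0). lra.
    + have := INR_subn (flr (beta * INR k)) (flr (phi_g * beta * (INR t - INR k))).
      have := flr_gt (beta * INR k).
      have := flr_le (phi_g * beta * (INR t - INR k)) (Rmult_le_pos _ _ (Rmult_le_pos _ _ (Rlt_le _ _ hphi) (Rlt_le _ _ hbpos)) tk0). lra.
    + have := INR_subn (flr (rho * Rmin (INR t) (phi_g * INR k))) (flr (phi_g * rho * (INR t - INR k))).
      have := flr_gt (rho * Rmin (INR t) (phi_g * INR k)).
      have := flr_le (phi_g * rho * (INR t - INR k)) (Rmult_le_pos _ _ (Rmult_le_pos _ _ (Rlt_le _ _ hphi) (Rlt_le _ _ hrpos)) tk0). lra.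
  set n := (_ + _)%N. move=> h.
  have : (k < n.+1)%coq_nat by apply: INR_lt; rewrite S_INR; lra.
  lia.
- move=> t k t' k' hk hk' hmax. rewrite !nf /=.
  have hb0 := Rlt_le _ _ hbpos. have hr0 := Rlt_le _ _ hrpos.
  case: (leqP t' t) => htt.
  + rewrite (maxn_idPl htt) in hmax.
    have hK : INR k' <= INR t - INR k.
      have : INR (k + k')%N <= INR t by apply: le_INR; lia.
      rewrite INR_addn; lra.
    have f1 : (flr (beta * INR k') <= flr (beta * (INR t - INR k)))%N.
      by apply: flr_mono; apply: Rmult_le_compat_l.
    have f2 : (flr (beta * Rmin (INR t') (phi_g * INR k')) <= flr (phi_g * beta * (INR t - INR k)))%N.
      by apply: flr_mono; apply: bnd_min.
    have f3 : (flr (rho * Rmin (INR t') (phi_g * INR k')) <= flr (phi_g * rho * (INR t - INR k)))%N.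
      by apply: flr_mono; apply: bnd_min.
    repeat apply: disj_cat_l; repeat apply: disj_cat_r; apply: disj_maps => i j;
      rewrite ?mem_iota => Hi Hj e;
      first [ exact: (dPP i j e) | exact: (dPS _ _ i j e) | exact: (dPS _ _ j i (esym e))
            | exact: (dPQ _ i j e) | exact: (dPQ _ j i (esym e)) | exact: (dSS i j e)
            | exact: (dSS j i (esym e)) | exact: (dSQ _ i j e) | exact: (dSQ _ j i (esym e))
            | (move/injS: e => e; subst; lia) | (move/injQ: e => e; subst; lia) ].
  + have htt' : (t <= t')%N by lia.
    rewrite (maxn_idPr htt') in hmax.
    have hK : INR k <= INR t' - INR k'.
      have : INR (k + k')%N <= INR t' by apply: le_INR; lia.
      rewrite INR_addn; lra.
    have f1 : (flr (beta * INR k) <= flr (beta * (INR t' - INR k')))%N.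
      by apply: flr_mono; apply: Rmult_le_compat_l.
    have f2 : (flr (beta * Rmin (INR t) (phi_g * INR k)) <= flr (phi_g * beta * (INR t' - INR k')))%N.
      by apply: flr_mono; apply: bnd_min.
    have f3 : (flr (rho * Rmin (INR t) (phi_g * INR k)) <= flr (phi_g * rho * (INR t' - INR k')))%N.
      by apply: flr_mono; apply: bnd_min.
    repeat apply: disj_cat_l; repeat apply: disj_cat_r; apply: disj_maps => i j;
      rewrite ?mem_iota => Hi Hj e;
      first [ exact: (dPP i j e) | exact: (dPS _ _ i j e) | exact: (dPS _ _ j i (esym e))
            | exact: (dPQ _ i j e) | exact: (dPQ _ j i (esym e)) | exact: (dSS i j e)
            | exact: (dSS j i (esym e)) | exact: (dSQ _ i j e) | exact: (dSQ _ j i (esym e))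
            | (move/injS: e => e; subst; lia) | (move/injQ: e => e; subst; lia) ].
Qed.
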